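(* Let $T>0$ and consider single-stage allocations $(T(1),T(0))$ with $T(1),T(0)>0$ and $T(1)+T(0)=T$. For standard deviations $\sigma(1),\sigma(0)\ge 0$, not both zero, let $$V(T(1),T(0))=\frac{\sigma^2(1)}{T(1)}+\frac{\sigma^2(0)}{T(0)},\qquad V(T^*(1),T^*(0))=\frac{(\sigma(1)+\sigma(0))^2}{T}.$$ Then the optimal solution of $$\inf_{T(1),T(0)}\ \sup_{\sigma(1),\sigma(0)}\ \frac{V(T(1),T(0))}{V(T^*(1),T^*(0))}$$ is $T(1)=T(0)=T/2$. Moreover, $$\sup_{\sigma(1),\sigma(0)}\frac{V(T/2,T/2)}{V(T^*(1),T^*(0))}=2,$$ and this supremum is attained when either $\sigma(1)=0$ or $\sigma(0)=0$.
   Context: $\sigma(1),\sigma(0)$ are the standard deviations of the treated and control potential outcomes $Y(1),Y(0)$. $(T^*(1),T^*(0))=\big(\tfrac{\sigma(1)}{\sigma(1)+\sigma(0)}T,\tfrac{\sigma(0)}{\sigma(1)+\sigma(0)}T\big)$ is the Neyman allocation, which minimizes $V$ over allocations summing to $T$; its value is $(\sigma(1)+\sigma(0))^2/T$. The quantity $V$ is the variance of the difference-in-means estimator under a completely randomized experiment with $T(1)$ treated and $T(0)$ control subjects drawn from a super-population. *)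

(* Defs.v *)
From HB Require Import structures.
From mathcomp Require Import all_boot all_order all_algebra.
From mathcomp Require Import all_classical all_reals.
Set Implicit Arguments. Unset Strict Implicit. Unset Printing Implicit Defensive.
Import Order.TTheory GRing.Theory Num.Theory.
Local Open Scope ring_scope.
Local Open Scope classical_set_scope.

(* Variance of difference-in-means with allocation (T1, T0). *)
Definition V {R : realType} (s1 s0 T1 T0 : R) : R :=
  s1 ^+ 2 / T1 + s0 ^+ 2 / T0.

(* Value at the Neyman allocation: (s1 + s0)^2 / T. *)
Definition Vstar {R : realType} (s1 s0 T : R) : R := (s1 + s0) ^+ 2 / T.

Definition admissible_sd {R : realType} (s1 s0 : R) : Prop :=
  0 <= s1 /\ 0 <= s0 /\ (s1 != 0 \/ s0 != 0).

Definition admissible_alloc {R : realType} (T T1 T0 : R) : Prop :=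
  0 < T1 /\ 0 < T0 /\ T1 + T0 = T.

Definition vratio {R : realType} (T T1 T0 s1 s0 : R) : R :=
  V s1 s0 T1 T0 / Vstar s1 s0 T.

Definition worst_ratio {R : realType} (T T1 T0 : R) : R :=
  sup [set r : R | exists s1 s0, admissible_sd s1 s0 /\ r = vratio T T1 T0 s1 s0].

(* Main.v *)
Require Import Defs.
From HB Require Import structures.
From mathcomp Require Import all_boot all_order all_algebra.
From mathcomp Require Import all_classical all_reals.
From mathcomp Require Import ring lra.
Import Order.TTheory GRing.Theory Num.Theory.
Local Open Scope ring_scope.

Lemma worst_eq (R : realType) (T T1 T0 : R) : admissible_alloc T T1 T0 ->
  worst_ratio T T1 T0 = T * Num.max T1^-1 T0^-1.
Proof.
move=> [h1 [h0 hs]].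
have hT : 0 < T by rewrite -hs; lra.
set m := Num.max T1^-1 T0^-1.
have hx : T1^-1 <= m by rewrite le_max lexx.
have hy : T0^-1 <= m by rewrite le_max lexx orbT.
have hx0 : 0 < T1^-1 by rewrite invr_gt0.
have hy0 : 0 < T0^-1 by rewrite invr_gt0.
have E1 : vratio T T1 T0 1 0 = T * T1^-1.
  rewrite /vratio /V /Vstar; field; apply/andP; split; lra.
have E0 : vratio T T1 T0 0 1 = T * T0^-1.
  rewrite /vratio /V /Vstar; field; apply/andP; split; lra.
have Hb : ubound [set r : R | exists s1 s0, admissible_sd s1 s0 /\ r = vratio T T1 T0 s1 s0] (T * m).
  move=> r [a [b [[ha [hb hab]] ->]]].
  have hS : 0 < (a + b) ^+ 2.
    have hab' : 0 < a + b.
      by case: hab => H; [have: 0 < a by rewrite lt_def H ha | have: 0 < b by rewrite lt_def H hb]; lra.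
    by rewrite exprn_gt0.
  have -> : vratio T T1 T0 a b = T * ((a ^+ 2 / T1 + b ^+ 2 / T0) / (a + b) ^+ 2).
    rewrite /vratio /Vstar /V; field; apply/andP; split; lra.
  rewrite ler_pM2l // ler_pdivrMr //.
  have h1' : 0 <= (m - T1^-1) * a ^+ 2 by apply: mulr_ge0; [lra| exact: sqr_ge0].
  have h2' : 0 <= (m - T0^-1) * b ^+ 2 by apply: mulr_ge0; [lra| exact: sqr_ge0].
  have h3' : 0 <= m * (a * b) by apply: mulr_ge0; [lra| exact: mulr_ge0].
  rewrite !expr2 in h1' h2' *; nra.
have Hub : has_ubound [set r : R | exists s1 s0, admissible_sd s1 s0 /\ r = vratio T T1 T0 s1 s0].
  by exists (T * m).
apply/eqP; rewrite eq_le; apply/andP; split.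
  apply: ge_sup => //.
  by exists (vratio T T1 T0 1 0), 1, 0; split => //; split; [lra|split; [lra|left; exact: oner_neq0]].
rewrite /m; case: (leP T1^-1 T0^-1) => _.
  apply: ub_le_sup => //; exists 0, 1; split; [split; [lra|split; [lra|right; exact: oner_neq0]]|by rewrite E0].
apply: ub_le_sup => //; exists 1, 0; split; [split; [lra|split; [lra|left; exact: oner_neq0]]|by rewrite E1].
Qed.

Theorem theorem1 (R : realType) (T : R) (hT : 0 < T) :
  admissible_alloc T (T / 2) (T / 2) /\
  (forall T1 T0, admissible_alloc T T1 T0 -> worst_ratio T (T / 2) (T / 2) <= worst_ratio T T1 T0) /\
  (forall T1 T0, admissible_alloc T T1 T0 ->
     worst_ratio T T1 T0 = worst_ratio T (T / 2) (T / 2) -> T1 = T / 2 /\ T0 = T / 2) /\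
  worst_ratio T (T / 2) (T / 2) = 2 /\
  (forall s1 s0 : R, admissible_sd s1 s0 -> (s1 = 0 \/ s0 = 0) ->
     vratio T (T / 2) (T / 2) s1 s0 = 2).
Proof.
have Ha : admissible_alloc T (T / 2) (T / 2) by split; [lra|split; lra].
have W2 : worst_ratio T (T / 2) (T / 2) = 2.
  rewrite worst_eq // maxxx; field; lra.
have key : forall T1 T0, admissible_alloc T T1 T0 ->
    exists x, worst_ratio T T1 T0 = T * x /\ x * T1 >= 1 /\ x * T0 >= 1.
  move=> T1 T0 H; rewrite worst_eq //; case: H => [h1 [h0 hs]].
  exists (Num.max T1^-1 T0^-1); split => //; split.
    have hm : T1^-1 <= Num.max T1^-1 T0^-1 by rewrite le_max lexx.
    apply: le_trans (ler_wpM2r (ltW h1) hm); by rewrite mulVf // gt_eqF.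
  have hm : T0^-1 <= Num.max T1^-1 T0^-1 by rewrite le_max lexx orbT.
  apply: le_trans (ler_wpM2r (ltW h0) hm); by rewrite mulVf // gt_eqF.
split => //; split.
  move=> T1 T0 H; rewrite W2; have [x [-> [hx1 hx0]]] := key _ _ H.
  case: H => [h1 [h0 <-]]; nra.
split.
  move=> T1 T0 H; rewrite W2; have [x [-> [hx1 hx0]]] := key _ _ H.
  case: H => [h1 [h0 hs]] E; subst T.
  have hx : x * T1 = 1 by nra.
  have hy : x * T0 = 1 by nra.
  have e : T1 = T0.
    have hxn : x != 0 by apply/eqP => Hc; rewrite Hc mul0r in hx; lra.
    apply: (mulfI hxn); lra.
  by subst T0; split; field.
split => //.
move=> s1 s0 [h1 [h0 hn]] [E|E]; subst.
Show.
subst.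
  have hs : s0 != 0 by case: hn => //; rewrite eqxx.
  rewrite /vratio /V /Vstar; field; rewrite hs; apply/andP; split; lra.
have hs : s1 != 0 by case: hn => //; rewrite eqxx.
rewrite /vratio /V /Vstar; field; rewrite hs; apply/andP; split; lra.
Qed.
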